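(* Let $\Sigma$ be a finitary signature, $X$ a set, and fix $p\in X\cup\Sigma_0$. Then the cpo $\Psi_\Sigma X$ (all $\Sigma$-trees over $X$, ordered by cutting) is a conservative completion of its subposet $\Phi_\Sigma X$ of finite trees. Explicitly, for every continuous map $f\colon\Phi_\Sigma X\to Q$ into a cpo $Q$, the map $\bar f(s)=\bigsqcup_{n\in\mathbb N} f(\partial_n s)$ is the unique continuous map $\Psi_\Sigma X\to Q$ extending $f$.
   Context: A finitary signature is a sequence $\Sigma=(\Sigma_n)_{n\in\mathbb N}$ of sets. A $\Sigma$-tree is an ordered rooted tree, finite or infinite, with nodes labelled in $\bigcup_n\Sigma_n$ such that a node labelled by $\sigma\in\Sigma_n$ has exactly $n$ children (up to isomorphism). A $\Sigma$-tree over $X$ is a $(\Sigma+X)$-tree with elements of $X$ as nullary symbols. $\Psi_\Sigma X$: all $\Sigma$-trees over $X$; $\Phi_\Sigma X$: the finite ones. $\partial_n t$: delete all nodes of height $>n$ and relabel the remaining nodes of height $n$ by $p$. Order by cutting: $s\le s'$ iff $s=s'$ or $s=\partial_n s'$ for some $n$. A map between posets is continuous if it is monotone and preserves all existing directed joins. A conservative completion of a poset $P$ is a cpo $\bar P$ containing $P$ as a subposet closed under all directed joins existing in $P$, such that every continuous map $f\colon P\to Q$ into a cpo $Q$ has a unique continuous extension $\bar f\colon\bar P\to Q$. *)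

(* Defs.v *)
From Stdlib Require Import List Arith.
Import ListNotations.

Definition is_poset {T : Type} (le : T -> T -> Prop) : Prop :=
  (forall x, le x x) /\
  (forall x y, le x y -> le y x -> x = y) /\
  (forall x y z, le x y -> le y z -> le x z).

Definition directed {T : Type} (le : T -> T -> Prop) (D : T -> Prop) : Prop :=
  (exists x, D x) /\
  (forall x y, D x -> D y -> exists z, D z /\ le x z /\ le y z).

Definition is_join {T : Type} (le : T -> T -> Prop) (D : T -> Prop) (j : T) : Prop :=
  (forall x, D x -> le x j) /\
  (forall u, (forall x, D x -> le x u) -> le j u).

Definition cpo {T : Type} (le : T -> T -> Prop) : Prop :=
  is_poset le /\ (forall D, directed le D -> exists j, is_join le D j).

Definition image {A B : Type} (f : A -> B) (D : A -> Prop) : B -> Prop :=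
  fun y => exists x, D x /\ y = f x.

Definition continuous {A B : Type} (leA : A -> A -> Prop) (leB : B -> B -> Prop)
  (f : A -> B) : Prop :=
  (forall x y, leA x y -> leB (f x) (f y)) /\
  (forall D j, directed leA D -> is_join leA D j -> is_join leB (image f D) (f j)).

(* C (ordered by leC) is a conservative completion of P (ordered by leP),
   P being identified with a subposet of C via the embedding e. *)
Definition conservative_completion {P C : Type}
  (leP : P -> P -> Prop) (leC : C -> C -> Prop) (e : P -> C) : Prop :=
  cpo leC /\
  (forall x y, e x = e y -> x = y) /\
  (forall x y, leP x y <-> leC (e x) (e y)) /\
  (forall D j, directed leP D -> is_join leP D j -> is_join leC (image e D) (e j)) /\
  (forall (Q : Type) (leQ : Q -> Q -> Prop), cpo leQ ->
     forall f : P -> Q, continuous leP leQ f ->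
     exists! g : C -> Q, continuous leC leQ g /\ (forall x, g (e x) = f x)).

(* A finitary signature is Sig : nat -> Type (Sig n = n-ary symbols).
   Labels of Sigma-trees over X: symbols of Sigma, or elements of X (nullary). *)
Definition label (Sig : nat -> Type) (X : Type) : Type := ({n : nat & Sig n} + X)%type.

Definition arity {Sig : nat -> Type} {X : Type} (l : label Sig X) : nat :=
  match l with
  | inl (existT _ n _) => n
  | inr _ => 0
  end.

(* A tree is given by its labelling of node addresses: a node is a path
   [i1; ...; ik] from the root (i-th child = index i, 0-based); None = no node. *)
Definition rawtree (Sig : nat -> Type) (X : Type) : Type := list nat -> option (label Sig X).

(* ordered rooted tree (finite or infinite) with a node labelled by an
   n-ary symbol having exactly the children 0, ..., n-1 *)
Definition is_tree {Sig : nat -> Type} {X : Type} (t : rawtree Sig X) : Prop :=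
  t [] <> None /\
  (forall w i, (exists l, t (w ++ [i]) = Some l) <->
               (exists l, t w = Some l /\ i < arity l)).

Definition Psi (Sig : nat -> Type) (X : Type) : Type := {t : rawtree Sig X | is_tree t}.

Definition finite_tree {Sig : nat -> Type} {X : Type} (t : rawtree Sig X) : Prop :=
  exists ws : list (list nat), forall w, t w <> None -> In w ws.

Definition Phi (Sig : nat -> Type) (X : Type) : Type := {t : Psi Sig X | finite_tree (proj1_sig t)}.

Definition Phi_to_Psi {Sig : nat -> Type} {X : Type} (x : Phi Sig X) : Psi Sig X := proj1_sig x.

(* cutting: partial_n t deletes the nodes of height > n and relabels the
   remaining nodes of height n by p (height of node w = length w) *)
Definition cut {Sig : nat -> Type} {X : Type} (p : label Sig X) (n : nat)
  (t : rawtree Sig X) : rawtree Sig X :=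
  fun w =>
    if Nat.ltb (length w) n then t w
    else if Nat.eqb (length w) n then
      match t w with Some _ => Some p | None => None end
    else None.

Definition cut_le {Sig : nat -> Type} {X : Type} (p : label Sig X)
  (s s' : rawtree Sig X) : Prop :=
  s = s' \/ exists n, s = cut p n s'.

Definition Psi_le {Sig : nat -> Type} {X : Type} (p : label Sig X)
  (s s' : Psi Sig X) : Prop := cut_le p (proj1_sig s) (proj1_sig s').

Definition Phi_le {Sig : nat -> Type} {X : Type} (p : label Sig X)
  (x y : Phi Sig X) : Prop := Psi_le p (Phi_to_Psi x) (Phi_to_Psi y).

(* Main.v *)
Require Import Defs.
From Stdlib Require Import List Arith Lia.
From Stdlib Require Import FunctionalExtensionality ProofIrrelevance Classical ClassicalEpsilon.
Import ListNotations.

Ltac cutcase :=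
  repeat match goal with
  | |- context[Nat.ltb ?a ?b] => destruct (Nat.ltb_spec a b)
  | |- context[Nat.eqb ?a ?b] => destruct (Nat.eqb_spec a b)
  end; try lia.

Lemma cut_cut {Sig X} (p : label Sig X) n m (t : rawtree Sig X) :
  cut p n (cut p m t) = cut p (Nat.min n m) t.
Proof.
  extensionality w. unfold cut. cutcase; try reflexivity; destruct (t w); reflexivity.
Qed.

Lemma cut_agree {Sig X} (p : label Sig X) n (a b : rawtree Sig X) :
  (forall w, length w <= n -> a w = b w) -> cut p n a = cut p n b.
Proof.
  intros H; extensionality w; unfold cut; cutcase; try (rewrite H by lia); reflexivity.
Qed.

Lemma cut_lt {Sig X} (p : label Sig X) n (t : rawtree Sig X) w :
  length w < n -> cut p n t w = t w.
Proof. intros H; unfold cut; cutcase; reflexivity. Qed.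

Lemma cut_gt {Sig X} (p : label Sig X) n (t : rawtree Sig X) w :
  n < length w -> cut p n t w = None.
Proof. intros H; unfold cut; cutcase; reflexivity. Qed.

Lemma cut_some {Sig X} (p : label Sig X) n (t : rawtree Sig X) w :
  cut p n t w <> None -> length w <= n /\ t w <> None.
Proof. unfold cut; cutcase; intros Hs; split; try lia; auto; try congruence;
  destruct (t w); congruence. Qed.

Lemma tree_prefix {Sig X} (t : rawtree Sig X) : is_tree t ->
  forall v w, t (w ++ v) <> None -> t w <> None.
Proof.
  intros [Hr Hc]. induction v using rev_ind; intros w H.
  - rewrite app_nil_r in H; auto.
  - apply IHv. rewrite app_assoc in H.
    destruct (t ((w ++ v) ++ [x])) eqn:E; [|congruence].
    destruct (proj1 (Hc (w++v) x) (ex_intro _ l E)) as [l' [E' _]]. congruence.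
Qed.

Lemma tree_firstn {Sig X} (t : rawtree Sig X) k v : is_tree t ->
  t v <> None -> t (firstn k v) <> None.
Proof. intros Ht H. apply (tree_prefix t Ht (skipn k v)). rewrite firstn_skipn. auto. Qed.

Lemma cut_tree {Sig X} (p : label Sig X) n (t : rawtree Sig X) :
  arity p = 0 -> is_tree t -> is_tree (cut p n t).
Proof.
  intros hp [Hr Hc]. split.
  - unfold cut; cbn [length]; cutcase; try exact Hr; destruct (t []) eqn:E; congruence.
  - intros w i. unfold cut. rewrite length_app. cbn [length]. cutcase.
    + apply Hc.
    + destruct (t (w ++ [i])) eqn:E.
      * split; intros _. destruct (proj1 (Hc w i) (ex_intro _ l E)) as [l' H']; eauto.
        eauto.
      * split; intros [l H1]. congruence.
        destruct (proj2 (Hc w i) (ex_intro _ l H1)) as [l' H']. congruence.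
    + split; intros [l H1]; [congruence|]. destruct H1 as [H1 H2].
      destruct (t w); inversion H1; subst; rewrite hp in H2; lia.
    + split; intros [l H1]; [congruence|]. destruct H1 as [H1 H2]. congruence.
Qed.

Fixpoint level {Sig X} (t : rawtree Sig X) (k : nat) : list (list nat) :=
  match k with
  | 0 => [[]]
  | S k => flat_map (fun w => match t w with
                             | Some l => map (fun i => w ++ [i]) (seq 0 (arity l))
                             | None => [] end) (level t k)
  end.

Lemma in_level {Sig X} (t : rawtree Sig X) : is_tree t ->
  forall w, t w <> None -> In w (level t (length w)).
Proof.
  intros Ht. induction w using rev_ind; intros H.
  - simpl; auto.
  - rewrite length_app; cbn [length]. rewrite Nat.add_1_r. simpl.
    apply in_flat_map. exists w. destruct Ht as [Hr Hc].
    destruct (t (w ++ [x])) eqn:E; [|congruence].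
    destruct (proj1 (Hc w x) (ex_intro _ l E)) as [l' [E' Hl]].
    split.
    + apply IHw. congruence.
    + rewrite E'. apply in_map_iff. exists x. split; [reflexivity|]. apply in_seq. lia.
Qed.

Lemma cut_finite {Sig X} (p : label Sig X) n (t : rawtree Sig X) :
  is_tree t -> finite_tree (cut p n t).
Proof.
  intros Ht. exists (flat_map (level t) (seq 0 (S n))). intros w H.
  apply cut_some in H. destruct H as [H1 H2].
  apply in_flat_map. exists (length w). split.
  - apply in_seq. lia.
  - apply in_level; auto.
Qed.

Lemma finite_cut_id {Sig X} (p : label Sig X) (t : rawtree Sig X) :
  finite_tree t -> exists N, cut p N t = t.
Proof.
  intros [ws Hws]. exists (S (list_max (map (@length nat) ws))).
  extensionality w. destruct (Nat.lt_ge_cases (length w) (S (list_max (map (@length nat) ws)))).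
  - apply cut_lt; auto.
  - destruct (t w) eqn:E.
    + exfalso. assert (Hin : In w ws) by (apply Hws; congruence).
      assert (Hl : length w <= list_max (map (@length nat) ws)).
      { pose proof (proj1 (list_max_le (map (@length nat) ws) _) (le_n _)) as F.
        rewrite Forall_forall in F. apply F. apply in_map. auto. }
      lia.
    + unfold cut; cutcase; try rewrite E; reflexivity.
Qed.

Lemma cut_le_refl {Sig X} (p : label Sig X) t : cut_le p t t.
Proof. left; reflexivity. Qed.

Lemma cut_le_cut {Sig X} (p : label Sig X) n t : cut_le p (cut p n t) t.
Proof. right; exists n; reflexivity. Qed.

Lemma cut_le_trans {Sig X} (p : label Sig X) a b c :
  cut_le p a b -> cut_le p b c -> cut_le p a c.
Proof.
  intros [->|[n ->]] [->|[m ->]]; try (right; eauto; fail); try (left; reflexivity).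
  right; exists (Nat.min n m); apply cut_cut.
Qed.

Lemma cut_le_antisym {Sig X} (p : label Sig X) a b :
  cut_le p a b -> cut_le p b a -> a = b.
Proof.
  intros [->|[n Hn]] [Hm|[m Hm]]; auto.
  assert (Ha : a = cut p (Nat.min n m) a) by (rewrite Hn at 1; rewrite Hm, cut_cut; reflexivity).
  rewrite Hm. rewrite Ha at 2. rewrite cut_cut.
  replace (Nat.min m (Nat.min n m)) with (Nat.min n m) by lia. exact Ha.
Qed.

Lemma cut_le_mono {Sig X} (p : label Sig X) n m t : n <= m -> cut_le p (cut p n t) (cut p m t).
Proof. intros H; right; exists n; rewrite cut_cut, Nat.min_l by lia; reflexivity. Qed.

Lemma lemma2 {Sig X} (p : label Sig X) (d L : rawtree Sig X) :
  (forall n, exists z, (forall w, length w <= n -> L w = z w) /\ cut_le p d z) -> cut_le p d L.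
Proof.
  intros H. destruct (classic (exists m, d = cut p m L)) as [[m Hm]|Hn].
  { right; eauto. }
  left. extensionality w. destruct (H (length w)) as [z [Ha [Heq|[m Hm]]]].
  - rewrite Heq, Ha by lia; auto.
  - destruct (Nat.le_gt_cases m (length w)).
    + exfalso; apply Hn; exists m. rewrite Hm. apply cut_agree.
      intros v Hv. symmetry. apply Ha. lia.
    + rewrite Hm, cut_lt by lia. symmetry; apply Ha; lia.
Qed.

Lemma lemma1 {Sig X} (p : label Sig X) (a u : rawtree Sig X) : is_tree a ->
  (forall n, exists z, (forall w, length w <= n -> a w = z w) /\ cut_le p z u) -> cut_le p a u.
Proof.
  intros Ht H. destruct (classic (exists m, a = cut p m u)) as [[m Hm]|Hn].
  { right; eauto. }
  left. extensionality w. destruct (H (S (length w))) as [z [Ha [Heq|[m Hm]]]].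
  - rewrite <- Heq. apply Ha; lia.
  - destruct (Nat.le_gt_cases m (length w)).
    + exfalso; apply Hn; exists m. extensionality v.
      destruct (Nat.le_gt_cases (length v) m).
      * rewrite Ha by lia. rewrite Hm. reflexivity.
      * rewrite cut_gt by lia. destruct (a v) eqn:E; auto. exfalso.
        assert (Hv : a (firstn (S m) v) <> None) by (apply tree_firstn; auto; congruence).
        assert (Hlen : length (firstn (S m) v) = S m) by (apply firstn_length_le; lia).
        rewrite Ha in Hv by lia. rewrite Hm, cut_gt in Hv by lia. congruence.
    + rewrite Ha by lia. rewrite Hm, cut_lt by lia. reflexivity.
Qed.

Lemma Psi_eq {Sig X} (a b : Psi Sig X) : proj1_sig a = proj1_sig b -> a = b.
Proof. destruct a, b; simpl; intros ->; f_equal; apply proof_irrelevance. Qed.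

Lemma Psi_poset {Sig X} (p : label Sig X) : is_poset (@Psi_le Sig X p).
Proof.
  split; [|split]; unfold Psi_le.
  - intros; apply cut_le_refl.
  - intros x y H1 H2; apply Psi_eq, (cut_le_antisym p); auto.
  - intros x y z; apply cut_le_trans.
Qed.

Lemma join_unique {T} (le : T -> T -> Prop) D a b :
  is_poset le -> is_join le D a -> is_join le D b -> a = b.
Proof.
  intros [_ [Ha _]] [H1 H2] [H3 H4]. apply Ha; [apply H2|apply H4]; auto.
Qed.

Lemma is_join_ext {T} (le : T -> T -> Prop) (D D' : T -> Prop) j :
  (forall q, D q <-> D' q) -> is_join le D j -> is_join le D' j.
Proof.
  intros E [H1 H2]. split.
  - intros x Hx; apply H1, E, Hx.
  - intros u Hu; apply H2; intros x Hx; apply Hu, E, Hx.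
Qed.

Definition cutPsi {Sig X} (p : label Sig X) (hp : arity p = 0) n (s : Psi Sig X) : Psi Sig X :=
  exist _ (cut p n (proj1_sig s)) (cut_tree p n _ hp (proj2_sig s)).

Definition cutPhi {Sig X} (p : label Sig X) (hp : arity p = 0) n (s : Psi Sig X) : Phi Sig X :=
  exist _ (cutPsi p hp n s) (cut_finite p n _ (proj2_sig s)).

Lemma psi_join {Sig X} (p : label Sig X) (D : Psi Sig X -> Prop) :
  directed (Psi_le p) D ->
  exists L, is_join (Psi_le p) D L /\
    forall n, exists z, D z /\ forall w, length w <= n -> proj1_sig L w = proj1_sig z w.
Proof.
  intros [[d0 Hd0] Hdir].
  assert (Stab : forall n, exists d0, D d0 /\ forall d, D d -> Psi_le p d0 d ->
            cut p n (proj1_sig d) = cut p n (proj1_sig d0)).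
  { intro n. apply NNPP; intro Hn.
    assert (H : forall d0, D d0 -> exists d, D d /\ Psi_le p d0 d /\
                  cut p n (proj1_sig d) <> cut p n (proj1_sig d0)).
    { intros e He. apply NNPP; intro H'. apply Hn. exists e. split; auto.
      intros d Hd Hle. apply NNPP; intro Hne. apply H'. exists d. auto. }
    assert (step : forall k, (exists d, D d /\ forall j, j < k -> proj1_sig d <> cut p j (proj1_sig d)) ->
              k < n /\ exists d, D d /\ forall j, j < S k -> proj1_sig d <> cut p j (proj1_sig d)).
    { intros k [d [Hd Hk]]. destruct (H d Hd) as [d' [Hd' [Hle Hne]]].
      destruct Hle as [Heq | [m Hm]].
      - exfalso. apply Hne. rewrite Heq. reflexivity.
      - assert (Hmn : m < n).
        { destruct (Nat.lt_ge_cases m n); auto. exfalso; apply Hne.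
          rewrite Hm, cut_cut, Nat.min_l by lia. reflexivity. }
        assert (Hkm : k <= m).
        { destruct (Nat.lt_ge_cases m k); auto. exfalso. apply (Hk m); auto.
          rewrite Hm. rewrite cut_cut, Nat.min_id. reflexivity. }
        split; [lia|]. exists d'. split; auto. intros j Hj Heq. apply Hne.
        assert (E : cut p m (proj1_sig d') = proj1_sig d').
        { rewrite Heq at 1. rewrite cut_cut, Nat.min_r by lia. symmetry; exact Heq. }
        rewrite Hm, E. reflexivity. }
    assert (All : forall k, exists d, D d /\ forall j, j < k -> proj1_sig d <> cut p j (proj1_sig d)).
    { induction k.
      - exists d0; split; auto; intros; lia.
      - apply step; auto. }
    destruct (step n (All n)); lia. }
  pose (dsel := fun n => proj1_sig (constructive_indefinite_description _ (Stab n))).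
  assert (Hdsel : forall n, D (dsel n) /\ forall d, D d -> Psi_le p (dsel n) d ->
            cut p n (proj1_sig d) = cut p n (proj1_sig (dsel n))).
  { intro n. exact (proj2_sig (constructive_indefinite_description _ (Stab n))). }
  assert (Up : forall d, D d -> forall n, exists z, D z /\ Psi_le p d z /\
             forall k, k <= n -> Psi_le p (dsel k) z).
  { intros d Hd n. induction n.
    - destruct (Hdir d (dsel 0) Hd (proj1 (Hdsel 0))) as [z [Hz [H1 H2]]].
      exists z; split; auto; split; auto. intros k Hk. replace k with 0 by lia. auto.
    - destruct IHn as [z [Hz [H1 H2]]].
      destruct (Hdir z (dsel (S n)) Hz (proj1 (Hdsel (S n)))) as [z' [Hz' [H3 H4]]].
      exists z'; split; auto; split.
      + eapply (cut_le_trans p); eauto.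
      + intros k Hk. destruct (Nat.eq_dec k (S n)) as [->|]; auto.
        eapply (cut_le_trans p); [apply H2; lia| exact H3]. }
  pose (Lraw := fun w => proj1_sig (dsel (S (length w))) w).
  assert (Agree : forall d, D d -> forall n, exists z, D z /\ Psi_le p d z /\
             forall w, length w <= n -> Lraw w = proj1_sig z w).
  { intros d Hd n. destruct (Up d Hd (S n)) as [z [Hz [H1 H2]]].
    exists z; split; auto; split; auto. intros w Hw.
    pose proof (proj2 (Hdsel (S (length w))) z Hz (H2 (S (length w)) ltac:(lia))) as E.
    apply (f_equal (fun t => t w)) in E. rewrite !cut_lt in E by lia.
    unfold Lraw. symmetry; exact E. }
  assert (HLt : is_tree Lraw).
  { split.
    - destruct (Agree d0 Hd0 0) as [z [_ [_ Hw]]]. rewrite Hw by (simpl; lia).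
      apply (proj2_sig z).
    - intros w i. destruct (Agree d0 Hd0 (S (length w))) as [z [_ [_ Hw]]].
      rewrite !Hw by (rewrite ?length_app; simpl; lia).
      apply (proj2 (proj2_sig z)). }
  exists (exist _ Lraw HLt). split; [split|].
  - intros d Hd. unfold Psi_le; simpl. apply lemma2. intros n.
    destruct (Agree d Hd n) as [z [_ [H1 H2]]]. exists (proj1_sig z); split; auto.
  - intros u Hu. unfold Psi_le; simpl. apply lemma1; auto. intros n.
    destruct (Agree d0 Hd0 n) as [z [Hz [_ H2]]]. exists (proj1_sig z); split; auto. apply Hu; auto.
  - intros n. destruct (Agree d0 Hd0 n) as [z [Hz [_ H2]]]. exists z; split; auto.
Qed.

Lemma join_cut_approx {Sig X} (p : label Sig X) (D : Psi Sig X -> Prop) j :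
  directed (Psi_le p) D -> is_join (Psi_le p) D j ->
  forall n, exists z, D z /\ cut p n (proj1_sig z) = cut p n (proj1_sig j).
Proof.
  intros Hd Hj n. destruct (psi_join p D Hd) as [L [HL HA]].
  rewrite (join_unique _ _ _ _ (Psi_poset p) Hj HL).
  destruct (HA n) as [z [Hz Hw]]. exists z; split; auto.
  apply cut_agree. intros; symmetry; auto.
Qed.

Lemma cuts_directed {Sig X} (p : label Sig X) (hp : arity p = 0) (s : Psi Sig X) :
  directed (Psi_le p) (fun t => exists n, proj1_sig t = cut p n (proj1_sig s)).
Proof.
  split.
  - exists (cutPsi p hp 0 s). exists 0; reflexivity.
  - intros x y [n1 H1] [n2 H2]. exists (cutPsi p hp (Nat.max n1 n2) s).
    split; [exists (Nat.max n1 n2); reflexivity|]. unfold Psi_le; simpl.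
    rewrite H1, H2. split; apply cut_le_mono; lia.
Qed.

Lemma cuts_join {Sig X} (p : label Sig X) (hp : arity p = 0) (s : Psi Sig X) :
  is_join (Psi_le p) (fun t => exists n, proj1_sig t = cut p n (proj1_sig s)) s.
Proof.
  split.
  - intros x [n Hn]. unfold Psi_le. rewrite Hn. apply cut_le_cut.
  - intros u Hu. unfold Psi_le. apply lemma1; [apply (proj2_sig s)|]. intros n.
    exists (cut p (S n) (proj1_sig s)). split.
    + intros w Hw. rewrite cut_lt by lia. reflexivity.
    + apply (Hu (cutPsi p hp (S n) s)). exists (S n); reflexivity.
Qed.

Lemma second_part {Sig X} (p : label Sig X) (hp : arity p = 0)
  (Q : Type) (leQ : Q -> Q -> Prop) (f : Phi Sig X -> Q) (g : Psi Sig X -> Q) :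
     continuous (Psi_le p) leQ g -> (forall x, g (Phi_to_Psi x) = f x) ->
     forall s : Psi Sig X,
       is_join leQ
         (fun q => exists (n : nat) (x : Phi Sig X),
            proj1_sig (Phi_to_Psi x) = cut p n (proj1_sig s) /\ q = f x)
         (g s).
Proof.
  intros [_ Hg] He s.
  pose proof (Hg _ s (cuts_directed p hp s) (cuts_join p hp s)) as J.
  eapply is_join_ext; [|exact J]. intros q. split.
  - intros [t [[n Hn] ->]].
    assert (Ft : finite_tree (proj1_sig t)) by (rewrite Hn; apply cut_finite, (proj2_sig s)).
    exists n, (exist _ t Ft). split; auto. rewrite <- He. reflexivity.
  - intros [n [x [Hx ->]]]. exists (Phi_to_Psi x). split; eauto.
Qed.

Theorem mainTheorem3 (Sig : nat -> Type) (X : Type) (p : label Sig X)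
  (hp : arity p = 0) :
  conservative_completion (Phi_le p) (Psi_le p) (@Phi_to_Psi Sig X) /\
  (forall (Q : Type) (leQ : Q -> Q -> Prop), cpo leQ ->
   forall f : Phi Sig X -> Q, continuous (Phi_le p) leQ f ->
   forall g : Psi Sig X -> Q,
     continuous (Psi_le p) leQ g -> (forall x, g (Phi_to_Psi x) = f x) ->
     forall s : Psi Sig X,
       is_join leQ
         (fun q => exists (n : nat) (x : Phi Sig X),
            proj1_sig (Phi_to_Psi x) = cut p n (proj1_sig s) /\ q = f x)
         (g s)).
Proof.
  split; [|intros Q leQ _ f _ g Hg He s; exact (second_part p hp Q leQ f g Hg He s)].
  split; [|split; [|split; [|split]]].
  - split; [apply Psi_poset|]. intros D HD. destruct (psi_join p D HD) as [L [H _]]; eauto.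
  - intros [x hx] [y hy]; unfold Phi_to_Psi; simpl; intros ->; f_equal; apply proof_irrelevance.
  - intros x y; split; auto.
  - intros D j HD Hj.
    assert (HDi : directed (Psi_le p) (image Phi_to_Psi D)).
    { destruct HD as [[x0 Hx0] Hp]. split.
      - exists (Phi_to_Psi x0), x0; auto.
      - intros a b [x [Hx ->]] [y [Hy ->]]. destruct (Hp x y Hx Hy) as [z [Hz [H1 H2]]].
        exists (Phi_to_Psi z); split; [exists z; auto|auto]. }
    destruct (psi_join p _ HDi) as [J [HJ _]].
    assert (HJe : Psi_le p J (Phi_to_Psi j)).
    { apply (proj2 HJ). intros t [x [Hx ->]]. exact (proj1 Hj x Hx). }
    assert (FJ : finite_tree (proj1_sig J)).
    { destruct HJe as [E|[m E]]; rewrite E.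
      - exact (proj2_sig j).
      - apply cut_finite, (proj2_sig (Phi_to_Psi j)). }
    assert (Hy : Phi_le p j (exist _ J FJ)).
    { apply (proj2 Hj). intros x Hx. exact (proj1 HJ (Phi_to_Psi x) (ex_intro _ x (conj Hx eq_refl))). }
    split.
    + intros t [x [Hx ->]]. exact (proj1 Hj x Hx).
    + intros u Hu. eapply (cut_le_trans p); [exact Hy|]. exact (proj2 HJ u Hu).
  - intros Q leQ HQ f Hf.
    assert (Sdir : forall s : Psi Sig X, directed leQ (fun q => exists (n : nat) (x : Phi Sig X),
            proj1_sig (Phi_to_Psi x) = cut p n (proj1_sig s) /\ q = f x)).
    { intros s. split.
      - exists (f (cutPhi p hp 0 s)), 0, (cutPhi p hp 0 s). split; reflexivity.
      - intros q1 q2 [n1 [x1 [H1 ->]]] [n2 [x2 [H2 ->]]].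
        exists (f (cutPhi p hp (Nat.max n1 n2) s)). split.
        + exists (Nat.max n1 n2), (cutPhi p hp (Nat.max n1 n2) s). split; reflexivity.
        + split; apply (proj1 Hf); unfold Phi_le, Psi_le; simpl; [rewrite H1|rewrite H2];
            apply cut_le_mono; lia. }
    pose (g := fun s => proj1_sig (constructive_indefinite_description _ (proj2 HQ _ (Sdir s)))).
    assert (Hgj : forall s, is_join leQ (fun q => exists (n : nat) (x : Phi Sig X),
            proj1_sig (Phi_to_Psi x) = cut p n (proj1_sig s) /\ q = f x) (g s)).
    { intros s. exact (proj2_sig (constructive_indefinite_description _ (proj2 HQ _ (Sdir s)))). }
    destruct (proj1 HQ) as [Qrefl [Qanti Qtrans]].
    assert (Gmono : forall s s', Psi_le p s s' -> leQ (g s) (g s')).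
    { intros s s' Hle. apply (proj2 (Hgj s)). intros q [n [x [Hx ->]]]. apply (proj1 (Hgj s')).
      destruct Hle as [E|[m Hm]].
      - exists n, x. rewrite Hx, E. auto.
      - exists (Nat.min n m), x. rewrite Hx, Hm, cut_cut. auto. }
    exists g. split; [split|].
    + split; auto. intros D j HD Hj. split.
      * intros q [d [Hd ->]]. apply Gmono. exact (proj1 Hj d Hd).
      * intros u Hu. apply (proj2 (Hgj j)). intros q [n [x [Hx ->]]].
        destruct (join_cut_approx p D j HD Hj n) as [z [Hz Ez]].
        apply Qtrans with (g z).
        -- apply (proj1 (Hgj z)). exists n, x. split; auto. rewrite Hx, Ez. reflexivity.
        -- apply Hu. exists z; auto.
    + intros x. apply (join_unique leQ _ _ _ (conj Qrefl (conj Qanti Qtrans)) (Hgj (Phi_to_Psi x))).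
      destruct (finite_cut_id p _ (proj2_sig x)) as [N HN]. split.
      * intros q [n [y [Hy ->]]]. apply (proj1 Hf). unfold Phi_le, Psi_le. rewrite Hy.
        apply cut_le_cut.
      * intros u Hu. apply Hu. exists N, x. split; auto.
    + intros g' [Hc He]. extensionality s.
      apply (join_unique leQ _ _ _ (conj Qrefl (conj Qanti Qtrans)) (Hgj s)).
      exact (second_part p hp Q leQ f g' Hc He s).
Qed.
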